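(* Let $A$ be a Lie conformal algebra and $M$ an $A$-module with a commutative associative product such that $\partial^M$ and all $a_\lambda$ act by derivations. For every $\xi\in\tilde\Gamma_1(A,M)$, the contraction $\iota_\xi$ is an odd derivation of degree $-1$ of the superalgebra $(\tilde\Gamma^\bullet(A,M),\wedge)$: $\iota_\xi(\tilde\alpha\wedge\tilde\beta)=\iota_\xi(\tilde\alpha)\wedge\tilde\beta+(-1)^h\tilde\alpha\wedge\iota_\xi(\tilde\beta)$ for $\tilde\alpha\in\tilde\Gamma^h$, $\tilde\beta\in\tilde\Gamma^k$.
   Context: $\mathbb F$ field of characteristic 0. $\tilde\Gamma^k$: $\mathbb F$-linear $\tilde\gamma:A^{\otimes k}\to\mathbb F[\lambda_1..\lambda_k]\otimes M$ with $\tilde\gamma(..,\partial a_i,..)=-\lambda_i\tilde\gamma(..)$ and skew-symmetric under simultaneous permutation of $a_i$ and $\lambda_i$ ($\tilde\Gamma^0=M$). Exterior product: $(\tilde\alpha\wedge\tilde\beta)_{\lambda_1..\lambda_{h+k}}(a_1..a_{h+k})=\sum_{\sigma\in S_{h+k}}\frac{\mathrm{sign}\sigma}{h!k!}\tilde\alpha_{\lambda_{\sigma(1)}..\lambda_{\sigma(h)}}(a_{\sigma(1)}..a_{\sigma(h)})\tilde\beta_{\lambda_{\sigma(h+1)}..\lambda_{\sigma(h+k)}}(a_{\sigma(h+1)}..a_{\sigma(h+k)})$. $\tilde\Gamma_1$: quotient of $A\otimes\mathrm{Hom}_{\mathbb F}(\mathbb F[\lambda],M)$ by $\partial a\otimes\phi=-a\otimes\lambda^*\phi$,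 $(\lambda^*\phi)(f)=\phi(\lambda f)$. For $\xi$ represented by $a_1\otimes\phi$: $(\iota_\xi\tilde\gamma)_{\lambda_2..\lambda_k}(a_2..a_k)=\phi^\mu(\tilde\gamma_{\lambda_1,..,\lambda_k}(a_1,..,a_k))$, where $\phi^\mu(f(\lambda_1)\otimes m)=\phi(f)m$ coefficientwise in $\lambda_2,..,\lambda_k$; $\iota_\xi=0$ on $\tilde\Gamma^0$. *)

(* Defs.v *)
From HB Require Import structures.
From mathcomp Require Import all_boot all_order all_algebra all_fingroup.
From mathcomp Require Import finmap.
From mathcomp.multinomials Require Import monalg.

Set Implicit Arguments.
Unset Strict Implicit.
Unset Printing Implicit Defensive.

Import GRing.Theory.
Local Open Scope ring_scope.

(* Conventions.
   * For an F-vector space V, F[lambda] (x) V is {malg V[nat]}: the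
     coefficient of lambda^n is p@_n.
   * F[lambda_1..lambda_k] (x) V is {malg V[{ffun 'I_k -> nat}]}: the key
     e : 'I_k -> nat is the exponent vector of the monomial
     lambda_1^(e 0) ... lambda_k^(e (k-1)).
   * A^k is {ffun 'I_k -> A}; a map A^{(x) k} -> ... is F-linear iff the
     corresponding function on k-tuples is F-linear in each slot. *)

Section Defs.
Variables (F : fieldType) (A M : lmodType F).

(* br a b = [a_lambda b] in F[lambda] (x) A; dA = partial *)
Definition is_LCA (dA : {linear A -> A}) (br : A -> A -> {malg A[nat]}) :=
  (
   (forall c a a' b n, (br (c *: a + a') b)@_n = c *: (br a b)@_n + (br a' b)@_n) /\
   (forall c a b b' n, (br a (c *: b + b'))@_n = c *: (br a b)@_n + (br a b')@_n)) /\
  [/\ (* [d a _lambda b] = - lambda [a_lambda b] *)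
      (forall a b n, (br (dA a) b)@_n = if n is n'.+1 then - (br a b)@_n' else 0),
      (* [a_lambda d b] = (d + lambda) [a_lambda b] *)
      (forall a b n, (br a (dA b))@_n =
                     dA ((br a b)@_n) + (if n is n'.+1 then (br a b)@_n' else 0)),
      (* skew-symmetry  [b_lambda a] = - [a_{-lambda-d} b] *)
      (forall a b n, (br b a)@_n =
          - \sum_(m <- msupp (br a b))
              (((-1) ^+ m * ('C(m, n))%:R) *: iter (m - n) dA ((br a b)@_m))) &
      (* Jacobi [a_l [b_m c]] = [[a_l b]_{l+m} c] + [b_m [a_l c]],
         coefficient of lambda^p mu^q *)
      (forall a b c p q, (br a ((br b c)@_q))@_p =
          \sum_(i < p.+1) (br ((br a b)@_(p - i)) c)@_(q + i) *+ 'C(q + i, i)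
          + (br b ((br a c)@_p))@_q)].

(* act a m = a_lambda m in F[lambda] (x) M ; dM = partial^M *)
Definition is_LCA_module (dA : {linear A -> A}) (br : A -> A -> {malg A[nat]})
    (dM : {linear M -> M}) (act : A -> M -> {malg M[nat]}) :=
  [/\ (forall c a a' m n, (act (c *: a + a') m)@_n = c *: (act a m)@_n + (act a' m)@_n),
      (forall c a m m' n, (act a (c *: m + m'))@_n = c *: (act a m)@_n + (act a m')@_n),
      (* (d a)_lambda m = - lambda a_lambda m *)
      (forall a m n, (act (dA a) m)@_n = if n is n'.+1 then - (act a m)@_n' else 0),
      (* a_lambda (d m) = (d + lambda) a_lambda m *)
      (forall a m n, (act a (dM m))@_n =
                     dM ((act a m)@_n) + (if n is n'.+1 then (act a m)@_n' else 0)) &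
      (* a_l (b_m v) - b_m (a_l v) = [a_l b]_{l+m} v, coefficient of l^p m^q *)
      (forall a b v p q, (act a ((act b v)@_q))@_p - (act b ((act a v)@_p))@_q =
          \sum_(i < p.+1) (act ((br a b)@_(p - i)) v)@_(q + i) *+ 'C(q + i, i))].

Definition is_deriv_product (dM : {linear M -> M}) (act : A -> M -> {malg M[nat]})
    (mulM : M -> M -> M) :=
  ((forall c x x' y, mulM (c *: x + x') y = c *: mulM x y + mulM x' y) /\
   (forall c x y y', mulM x (c *: y + y') = c *: mulM x y + mulM x y')) /\
  [/\
      (forall x y z, mulM x (mulM y z) = mulM (mulM x y) z),
      (forall x y, mulM x y = mulM y x),
      (forall x y, dM (mulM x y) = mulM (dM x) y + mulM x (dM y)) &
      (forall a x y n, (act a (mulM x y))@_n = mulM ((act a x)@_n) y + mulM x ((act a y)@_n))].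

Definition cochain (k : nat) := {ffun 'I_k -> A} -> {malg M[{ffun 'I_k -> nat}]}.

Definition upd k (a : {ffun 'I_k -> A}) (i : 'I_k) (x : A) : {ffun 'I_k -> A} :=
  [ffun j => if j == i then x else a j].

Definition is_cochain (dA : {linear A -> A}) k (g : cochain k) :=
  [/\
      (forall a i c x y (e : {ffun 'I_k -> nat}), (g (upd a i (c *: x + y)))@_e =
                           c *: (g (upd a i x))@_e + (g (upd a i y))@_e),
      (* g(.., d a_i, ..) = - lambda_i g(..) *)
      (forall a i (e : {ffun 'I_k -> nat}), (g (upd a i (dA (a i))))@_e =
          if e i is n.+1 then - (g a)@_[ffun j => if j == i then n else e j] else 0) &
      (forall (s : 'S_k) (a : {ffun 'I_k -> A}) (e : {ffun 'I_k -> nat}),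
          (g [ffun i => a (s i)])@_[ffun i => e (s i)] = (-1) ^+ odd_perm s *: (g a)@_e)].

(* exponent vector of lambda_{s(1)}^{d1 1}..lambda_{s(h)}^{d1 h}
                      lambda_{s(h+1)}^{d2 1}..lambda_{s(h+k)}^{d2 k} *)
Definition comb h k (s : 'S_(h + k)) (d1 : {ffun 'I_h -> nat}) (d2 : {ffun 'I_k -> nat})
  : {ffun 'I_(h + k) -> nat} :=
  [ffun x => match split ((s^-1)%g x) with inl i => d1 i | inr j => d2 j end].

Definition wedge (mulM : M -> M -> M) h k (al : cochain h) (be : cochain k)
  : cochain (h + k) := fun a =>
  \sum_(s : 'S_(h + k))
    \sum_(d1 <- msupp (al [ffun i => a (s (lshift k i))]))
    \sum_(d2 <- msupp (be [ffun j => a (s (rshift h j))]))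
      << ((-1) ^+ odd_perm s / ((h`!)%:R * (k`!)%:R)) *:
           mulM (al [ffun i => a (s (lshift k i))])@_d1
                (be [ffun j => a (s (rshift h j))])@_d2 *g comb s d1 d2 >>.

(* an element xi of tilde Gamma_1 is represented by a finite sum
   sum_j a_j (x) phi_j, i.e. by a list of pairs (a_j, phi_j) *)
Definition gamma1_rep := seq (A * {linear {poly F} -> M}).

Definition cons_arg k (x : A) (a : {ffun 'I_k -> A}) : {ffun 'I_k.+1 -> A} :=
  [ffun i => if unlift ord0 i is Some j then a j else x].

Definition tail_exp k (d : {ffun 'I_k.+1 -> nat}) : {ffun 'I_k -> nat} :=
  [ffun j => d (lift ord0 j)].

(* iota_{a_1 (x) phi} on tilde Gamma^{k+1}:
   phi^mu (f(lambda_1) (x) m) = phi(f) m, coefficientwise in lambda_2..lambda_k *)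
Definition iotaS (mulM : M -> M -> M) (xi : gamma1_rep) k (g : cochain k.+1)
  : cochain k := fun a =>
  \sum_(p <- xi) \sum_(d <- msupp (g (cons_arg p.1 a)))
     << mulM (p.2 'X^(d ord0)) (g (cons_arg p.1 a))@_d *g tail_exp d >>.

Definition contr (mulM : M -> M -> M) (xi : gamma1_rep) k : cochain k -> cochain k.-1 :=
  match k return cochain k -> cochain k.-1 with
  | 0 => fun _ _ => 0
  | k'.+1 => @iotaS mulM xi k'
  end.

(* component of a homogeneous element of tilde Gamma^bullet = (+)_n tilde Gamma^n,
   evaluated on a_1..a_r and read at the monomial lambda^e (e of length r);
   zero if the degree n differs from r.  Used to compare homogeneous elements
   living in (possibly non-convertible) degrees. *)
Definition gcomp n (g : cochain n) (a : seq A) (e : seq nat) : M :=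
  if (size a == n) && (size e == n) then
    (g [ffun i : 'I_n => nth 0 a i])@_[ffun i : 'I_n => nth 0%N e i]
  else 0.

End Defs.

(* Main.v *)
Require Import Defs.
From HB Require Import structures.
From mathcomp Require Import all_boot all_order all_algebra all_fingroup.
From mathcomp Require Import finmap.
From mathcomp.multinomials Require Import monalg.
From mathcomp Require Import ring.

Set Implicit Arguments.
Unset Strict Implicit.
Unset Printing Implicit Defensive.
Import GRing.Theory.
Local Open Scope ring_scope.
Section MulM.
Variables (F : fieldType) (M : lmodType F) (mulM : M -> M -> M).
Hypothesis mulMl : forall c x x' y, mulM (c *: x + x') y = c *: mulM x y + mulM x' y.
Hypothesis mulMr : forall c x y y', mulM x (c *: y + y') = c *: mulM x y + mulM x y'.

Lemma mulM0l y : mulM 0 y = 0.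
Proof.
have := mulMl 1 0 0 y; rewrite scaler0 addr0 scale1r => H.
by apply: (@addrI _ (mulM 0 y)); rewrite addr0 -H.
Qed.
Lemma mulM0r x : mulM x 0 = 0.
Proof.
have := mulMr 1 x 0 0; rewrite scaler0 addr0 scale1r => H.
by apply: (@addrI _ (mulM x 0)); rewrite addr0 -H.
Qed.
Lemma mulMDl x x' y : mulM (x + x') y = mulM x y + mulM x' y.
Proof. by have := mulMl 1 x x' y; rewrite !scale1r. Qed.
Lemma mulMDr x y y' : mulM x (y + y') = mulM x y + mulM x y'.
Proof. by have := mulMr 1 x y y'; rewrite !scale1r. Qed.
Lemma mulMZl c x y : mulM (c *: x) y = c *: mulM x y.
Proof. by have := mulMl c x 0 y; rewrite !addr0 mulM0l addr0. Qed.
Lemma mulMZr c x y : mulM x (c *: y) = c *: mulM x y.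
Proof. by have := mulMr c x y 0; rewrite !addr0 mulM0r addr0. Qed.
Lemma mulM_suml I (r : seq I) (P : pred I) (f : I -> M) y :
  mulM (\sum_(i <- r | P i) f i) y = \sum_(i <- r | P i) mulM (f i) y.
Proof. by elim/big_rec2: _ => [|i a b _ <-]; rewrite ?mulM0l ?mulMDl. Qed.
Lemma mulM_sumr I (r : seq I) (P : pred I) (f : I -> M) x :
  mulM x (\sum_(i <- r | P i) f i) = \sum_(i <- r | P i) mulM x (f i).
Proof. by elim/big_rec2: _ => [|i a b _ <-]; rewrite ?mulM0r ?mulMDr. Qed.
End MulM.
Lemma sum_pred1_seq (V : zmodType) (T : eqType) (r : seq T) (y : T) (f : T -> V) :
  uniq r -> \sum_(x <- r) f x *+ (x == y) = (if y \in r then f y else 0).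
Proof.
elim: r => [|x r IH] /=; first by rewrite big_nil.
case/andP=> xr ur; rewrite big_cons IH // inE.
case: (eqVneq x y) => [<-|ne]; first by rewrite ?eqxx mulr1n /= (negbTE xr) addr0.
by rewrite mulr0n add0r; case: (eqVneq y x) => // E; rewrite E eqxx in ne.
Qed.

Lemma split_lshift m n (i : 'I_m) : split (lshift n i) = inl i.
Proof. exact: (unsplitK (inl i)). Qed.
Lemma split_rshift m n (i : 'I_n) : split (rshift m i) = inr i.
Proof. exact: (unsplitK (inr i)). Qed.

Lemma comb_eq h k (s : 'S_(h + k)) d1 d2 (d : {ffun 'I_(h + k) -> nat}) :
  (comb s d1 d2 == d) = (d1 == [ffun i => d (s (lshift k i))]) &&
                         (d2 == [ffun j => d (s (rshift h j))]).
Proof.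
apply/eqP/andP => [<-|[/eqP-> /eqP->]].
  split; apply/eqP/ffunP => i; rewrite !ffunE permK ?split_lshift ?split_rshift //.
apply/ffunP => x; rewrite !ffunE.
case: splitP => j Ej; rewrite ffunE;
  [have -> : lshift k j = (s^-1)%g x | have -> : rshift h j = (s^-1)%g x];
  rewrite ?permKV //; exact/val_inj.
Qed.

Section Wedge.
Variables (F : fieldType) (A M : lmodType F) (mulM : M -> M -> M).
Hypothesis mulMl : forall c x x' y, mulM (c *: x + x') y = c *: mulM x y + mulM x' y.
Hypothesis mulMr : forall c x y y', mulM x (c *: y + y') = c *: mulM x y + mulM x y'.

Definition wterm h k (al : cochain A M h) (be : cochain A M k)
  (b : {ffun 'I_(h + k) -> A}) (d : {ffun 'I_(h + k) -> nat}) (s : 'S_(h + k)) : M :=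
  ((-1) ^+ odd_perm s / ((h`!)%:R * (k`!)%:R)) *:
   mulM (al [ffun i => b (s (lshift k i))])@_[ffun i => d (s (lshift k i))]
        (be [ffun j => b (s (rshift h j))])@_[ffun j => d (s (rshift h j))].

Lemma wedgeE h k (al : cochain A M h) (be : cochain A M k) b d :
  (wedge mulM al be b)@_d = \sum_(s : 'S_(h + k)) wterm al be b d s.
Proof.
rewrite /wedge raddf_sum; apply: eq_bigr => s _.
rewrite raddf_sum.
set D1 := [ffun i => d (s (lshift k i))]; set D2 := [ffun j => d (s (rshift h j))].
set P1 := al _; set P2 := be _.
transitivity (\sum_(d1 <- msupp P1) (\sum_(d2 <- msupp P2)
   (((-1) ^+ odd_perm s / ((h`!)%:R * (k`!)%:R)) *: mulM P1@_d1 P2@_d2 *+ (d2 == D2))) *+ (d1 == D1)).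
  apply: eq_bigr => d1 _; rewrite raddf_sum -sumrMnl; apply: eq_bigr => d2 _.
  by rewrite /= mcoeffU comb_eq -mulnb mulnC mulrnA.
rewrite (@sum_pred1_seq _ _ (msupp P1) D1 (fun d1 => \sum_(d2 <- msupp P2) _) (fset_uniq _)).
have E2 : forall d1, \sum_(d2 <- msupp P2)
   (((-1) ^+ odd_perm s / ((h`!)%:R * (k`!)%:R)) *: mulM P1@_d1 P2@_d2 *+ (d2 == D2))
   = ((-1) ^+ odd_perm s / ((h`!)%:R * (k`!)%:R)) *: mulM P1@_d1 P2@_D2.
  move=> d1; rewrite (@sum_pred1_seq _ _ (msupp P2) D2 (fun d2 => _) (fset_uniq _)); case: ifP => // /negbT H.
  by rewrite (mcoeff_outdom H) (mulM0r mulMr) scaler0.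
rewrite E2 /wterm; case: ifP => // /negbT H.
by rewrite (mcoeff_outdom H) (mulM0l mulMl) scaler0.
Qed.
End Wedge.
Definition cons_exp k (j : nat) (d : {ffun 'I_k -> nat}) : {ffun 'I_k.+1 -> nat} :=
  [ffun i => if unlift ord0 i is Some q then d q else j].

Lemma cons_exp0 k j (d : {ffun 'I_k -> nat}) : cons_exp j d ord0 = j.
Proof. by rewrite ffunE unlift_none. Qed.
Lemma cons_expS k j (d : {ffun 'I_k -> nat}) q : cons_exp j d (lift ord0 q) = d q.
Proof. by rewrite ffunE liftK. Qed.
Lemma tail_cons_exp k j (d : {ffun 'I_k -> nat}) : tail_exp (cons_exp j d) = d.
Proof. by apply/ffunP => q; rewrite ffunE cons_expS. Qed.
Lemma cons_exp_tail k (d : {ffun 'I_k.+1 -> nat}) : cons_exp (d ord0) (tail_exp d) = d.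
Proof.
apply/ffunP => i; rewrite ffunE; case: unliftP => [q ->|->] //.
by rewrite ffunE.
Qed.
Lemma cons_exp_eq k j (d : {ffun 'I_k -> nat}) d' :
  (d' == cons_exp j d) = (j == d' ord0) && (tail_exp d' == d).
Proof.
apply/eqP/andP => [->|[/eqP-> /eqP<-]]; last by rewrite cons_exp_tail.
by rewrite cons_exp0 tail_cons_exp.
Qed.

Section Iota.
Variables (F : fieldType) (A M : lmodType F) (mulM : M -> M -> M).
Hypothesis mulMl : forall c x x' y, mulM (c *: x + x') y = c *: mulM x y + mulM x' y.
Hypothesis mulMr : forall c x y y', mulM x (c *: y + y') = c *: mulM x y + mulM x y'.

Lemma iota1E k (G : {malg M[{ffun 'I_k.+1 -> nat}]}) (phi : {poly F} -> M) d B :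
  (forall j, (B <= j)%N -> G@_(cons_exp j d) = 0) ->
  (\sum_(d' <- msupp G) << mulM (phi 'X^(d' ord0)) G@_d' *g tail_exp d' >>)@_d =
  \sum_(j < B) mulM (phi 'X^j) G@_(cons_exp j d).
Proof.
move=> HB.
pose H (d' : {ffun 'I_k.+1 -> nat}) := mulM (phi 'X^(d' ord0)) G@_d'.
transitivity (\sum_(d' <- msupp G) H d' *+ (tail_exp d' == d)).
  by rewrite raddf_sum; apply: eq_bigr => d' _; rewrite /= mcoeffU.
transitivity (\sum_(j < B) H (cons_exp j d)).
  transitivity (\sum_(j < B) \sum_(d' <- msupp G) H d' *+ (d' == cons_exp j d)); last first.
    apply: eq_bigr => j _.
    rewrite (@sum_pred1_seq _ _ (msupp G) (cons_exp j d) H (fset_uniq _)).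
    case: ifP => // /negbT Hn.
    by rewrite /H (mcoeff_outdom Hn) (mulM0r mulMr).
  rewrite exchange_big /= big_seq [RHS]big_seq; apply: eq_bigr => d' Hd.
  under eq_bigr do rewrite cons_exp_eq.
  case: (eqVneq (tail_exp d') d) => Et; last by rewrite mulr0n big1 // => j _; rewrite andbF mulr0n.
  have lt : (d' ord0 < B)%N.
    rewrite ltnNge; apply/negP => /HB.
    rewrite -Et cons_exp_tail => /eqP; rewrite mcoeff_eq0 Hd //.
  rewrite mulr1n (bigD1 (Ordinal lt)) //= eqxx mulr1n big1 ?addr0 // => j Hj.
  by rewrite andbT; case: eqP => [E|_]; [case/eqP: Hj; apply: val_inj | rewrite mulr0n].
by apply: eq_bigr => j _; rewrite /H cons_exp0.
Qed.
End Iota.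
Lemma cons_arg_nth (F : fieldType) (A : lmodType F) n (x : A) (a : seq A) :
  cons_arg x [ffun i : 'I_n => nth 0 a i] = [ffun i : 'I_n.+1 => nth 0 (x :: a) i].
Proof. by apply/ffunP => i; rewrite !ffunE; case: unliftP => [q ->|->] //=; rewrite ffunE. Qed.
Lemma cons_exp_nth n j (e : seq nat) :
  cons_exp j [ffun i : 'I_n => nth 0%N e i] = [ffun i : 'I_n.+1 => nth 0%N (j :: e) i].
Proof. by apply/ffunP => i; rewrite !ffunE; case: unliftP => [q ->|->] //=; rewrite ffunE. Qed.

Section Contr.
Variables (F : fieldType) (A M : lmodType F) (mulM : M -> M -> M).
Hypothesis mulMl : forall c x x' y, mulM (c *: x + x') y = c *: mulM x y + mulM x' y.
Hypothesis mulMr : forall c x y y', mulM x (c *: y + y') = c *: mulM x y + mulM x y'.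

Lemma contrE n (g : cochain A M n) (xi : gamma1_rep A M) a e B :
  (forall x, x \in [seq p.1 | p <- xi] -> forall j, (B <= j)%N ->
      gcomp g (x :: a) (j :: e) = 0) ->
  gcomp (contr mulM xi g) a e =
  \sum_(p <- xi) \sum_(j < B) mulM (p.2 'X^j) (gcomp g (p.1 :: a) ((j : nat) :: e)).
Proof.
case: n g => [|n] g HB.
  rewrite /gcomp /= big1 ?mcoeff0; first by case: ifP.
  by move=> p _; rewrite big1 // => j _; rewrite (mulM0r mulMr).
rewrite /gcomp /= !eqSS; case: ifP => Hs; last first.
  by rewrite big1 // => p _; rewrite big1 // => j _; rewrite (mulM0r mulMr).
rewrite /iotaS raddf_sum; elim: xi HB => [|p xi IH] HB; first by rewrite !big_nil.
rewrite !big_cons IH; last by move=> x Hx; apply: HB; rewrite inE Hx orbT.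
congr (_ + _).
rewrite /= (@iota1E _ _ _ mulMr _ _ _ _ B) => [|j Hj].
  by apply: eq_bigr => j _; rewrite cons_arg_nth cons_exp_nth.
have := HB p.1 (mem_head _ _) j Hj; rewrite /gcomp /= !eqSS Hs.
by rewrite cons_arg_nth cons_exp_nth.
Qed.
End Contr.
Definition bnd (F : fieldType) (A M : lmodType F) n (g : cochain A M n) (L : seq A) (B : nat) :=
  forall (b : {ffun 'I_n -> A}) (d : {ffun 'I_n -> nat}) (i : 'I_n),
    (forall q, b q \in L) -> (B <= d i)%N -> (g b)@_d = 0.

Lemma bnd_mono (F : fieldType) (A M : lmodType F) n (g : cochain A M n) L B B' :
  (B <= B')%N -> bnd g L B -> bnd g L B'.
Proof. by move=> le H b d i Hb Hi; apply: (H b d i Hb); apply: leq_trans Hi. Qed.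

Lemma bnd_exists (F : fieldType) (A M : lmodType F) n (g : cochain A M n) L :
  exists B, bnd g L B.
Proof.
pose bf (f : {ffun 'I_n -> 'I_(size L)}) := [ffun q => nth 0 L (f q)].
exists (\sum_(f : {ffun 'I_n -> 'I_(size L)}) \sum_(d <- msupp (g (bf f))) \sum_(i < n) (d i).+1)%N.
move=> b d i Hb Hi; apply/eqP; rewrite mcoeff_eq0; apply/negP => Hd.
have Hf : forall q, (index (b q) L < size L)%N by move=> q; rewrite index_mem.
pose f := [ffun q => Ordinal (Hf q)].
have Ebf : bf f = b by apply/ffunP => q; rewrite !ffunE /= nth_index.
rewrite -Ebf in Hd.
move: Hi; rewrite leqNgt => /negP; apply.
rewrite (bigD1 f) //= (bigD1_seq d Hd (fset_uniq _)) /= (bigD1 i) //= -!addnA.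
by rewrite ltnS leq_addr.
Qed.
Lemma perm_sum_lift (V : zmodType) n (i0 j0 : 'I_n.+1) (F : 'S_n.+1 -> V) :
  \sum_(s : 'S_n.+1 | s i0 == j0) F s = \sum_(t : 'S_n) F (lift_perm i0 j0 t).
Proof.
rewrite (reindex (lift_perm i0 j0)); last first.
  pose ulsf i (s : 'S_n.+1) k := odflt k (unlift (s i) (s (lift i k))).
  have ulsfK i (s : 'S_n.+1) k: lift (s i) (ulsf i s k) = s (lift i k).
    rewrite /ulsf; have:= neq_lift i k.
    by rewrite -(can_eq (permK s)) => /unlift_some[] ? ? ->.
  have inj_ulsf: injective (ulsf i0 _).
    move=> s; apply: can_inj (ulsf (s i0) s^-1%g) _ => k'.
    by rewrite {1}/ulsf ulsfK !permK liftK.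
  exists (fun s => perm (inj_ulsf s)) => [s _ | s].
    by apply/permP=> k'; rewrite permE /ulsf lift_perm_lift lift_perm_id liftK.
  move/(s _ =P _) => si0; apply/permP=> k.
  case: (unliftP i0 k) => [k'|] ->; rewrite ?lift_perm_id //.
  by rewrite lift_perm_lift -si0 permE ulsfK.
by apply: eq_bigl => t; rewrite lift_perm_id eqxx.
Qed.

Lemma odd_cast_perm m n (E : m = n) (s : 'S_m) : odd_perm (cast_perm E s) = odd_perm s.
Proof. by subst n; rewrite cast_perm_id. Qed.

Lemma split_perm_sum (V : zmodType) N m (E : N = m.+1) (Q : pred nat) (F : 'S_N -> V)
  (z0 : 'I_N) : val z0 = 0%N ->
  \sum_(s : 'S_N | Q (val ((s^-1)%g z0))) F s =
  \sum_(i < m.+1 | Q i) \sum_(t : 'S_m) F (cast_perm (esym E) (lift_perm i ord0 t)).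
Proof.
subst N => Hz.
have -> : z0 = ord0 by apply/val_inj.
rewrite (partition_big (fun s : 'S_m.+1 => (s^-1)%g ord0) (fun i : 'I_m.+1 => Q i)) //.
apply: eq_bigr => i Qi.
under [RHS]eq_bigr do rewrite cast_perm_id.
rewrite -perm_sum_lift; apply: eq_bigl => s.
have -> : (s i == ord0) = ((s^-1)%g ord0 == i).
  by apply/eqP/eqP => [<-|<-]; rewrite ?permK ?permKV.
by case: (eqVneq (s^-1%g ord0) i) => [E|]; rewrite ?andbF // E Qi.
Qed.
Lemma left_valL h' k (i : 'I_(h'+k).+1) (Hi : (i < h'.+1)%N) (t : 'S_(h'+k)) (q : 'I_h'.+1) :
  val (lift_perm i ord0 t (lshift k q : 'I_(h'+k).+1)) =
  (if unlift ord0 (lift_perm (Ordinal Hi) ord0 1 q) is Some w then (t (lshift k w)).+1 else 0)%N.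
Proof.
case: (unliftP (Ordinal Hi) q) => [q'|] ->.
  rewrite lift_perm_lift perm1 liftK.
  have -> : (lshift k (lift (Ordinal Hi) q') : 'I_(h'+k).+1) = lift i (lshift k q') by apply/val_inj.
  by rewrite lift_perm_lift /= /bump leq0n add1n.
rewrite lift_perm_id unlift_none.
have -> : (lshift k (Ordinal Hi) : 'I_(h'+k).+1) = i by apply/val_inj.
by rewrite lift_perm_id.
Qed.

Lemma left_valR h' k (i : 'I_(h'+k).+1) (Hi : (i < h'.+1)%N) (t : 'S_(h'+k)) (q : 'I_k) :
  val (lift_perm i ord0 t (rshift h'.+1 q : 'I_(h'+k).+1)) = (t (rshift h' q)).+1.
Proof.
have -> : (rshift h'.+1 q : 'I_(h'+k).+1) = lift i (rshift h' q).
  apply/val_inj; rewrite /= /bump (leq_trans _ (leq_addr q h')) //.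
by rewrite lift_perm_lift /= /bump leq0n add1n.
Qed.

Lemma right_valL h k' (i : 'I_(h+k').+1) (Hi : (h <= i)%N) (t : 'S_(h+k')) (q : 'I_h) :
  val (cast_perm (esym (addnS h k')) (lift_perm i ord0 t) (lshift k'.+1 q)) = (t (lshift k' q)).+1.
Proof.
rewrite cast_permE /=.
have -> : cast_ord (esym (esym (addnS h k'))) (lshift k'.+1 q) = lift i (lshift k' q).
  apply/val_inj; rewrite /= /bump.
  by have -> : (i <= q)%N = false by apply/negbTE; rewrite -ltnNge (leq_trans (ltn_ord q) Hi).
by rewrite lift_perm_lift /= /bump leq0n add1n.
Qed.

Lemma right_valR h k' (i : 'I_(h+k').+1) (Hi : (h <= i)%N) (Hi2 : (i - h < k'.+1)%N)
  (t : 'S_(h+k')) (q : 'I_k'.+1) :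
  val (cast_perm (esym (addnS h k')) (lift_perm i ord0 t) (rshift h q)) =
  (if unlift ord0 (lift_perm (Ordinal Hi2) ord0 1 q) is Some w then (t (rshift h w)).+1 else 0)%N.
Proof.
rewrite cast_permE /=.
case: (unliftP (Ordinal Hi2) q) => [q'|] ->.
  rewrite lift_perm_lift perm1 liftK.
  have -> : cast_ord (esym (esym (addnS h k'))) (rshift h (lift (Ordinal Hi2) q')) = lift i (rshift h q').
    by apply/val_inj; rewrite /= -bumpDl subnKC.
  by rewrite lift_perm_lift /= /bump leq0n add1n.
rewrite lift_perm_id unlift_none.
have -> : cast_ord (esym (esym (addnS h k'))) (rshift h (Ordinal Hi2)) = i.
  by apply/val_inj; rewrite /= subnKC.
by rewrite lift_perm_id.
Qed.
Lemma sign_cancel (F : fieldType) (b1 b0 b2 : bool) (C : F) : b0 = false ->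
  ((-1) ^+ (b1 (+) b0 (+) b2) / C) * (-1) ^+ (b1 (+) b0 (+) false) = (-1) ^+ b2 / C.
Proof.
by move=> ->; case: b1; case: b2; rewrite /= ?expr0 ?expr1; ring.
Qed.

Section Blocks.
Variables (F : fieldType) (A M : lmodType F) (mulM : M -> M -> M) (dA : {linear A -> A}).
Hypothesis mulMl : forall c x x' y, mulM (c *: x + x') y = c *: mulM x y + mulM x' y.
Hypothesis mulMr : forall c x y y', mulM x (c *: y + y') = c *: mulM x y + mulM x y'.
Hypothesis char0 : [pchar F] =i pred0.

Lemma natF_neq0 n : (0 < n)%N -> (n%:R : F) != 0.
Proof. by move=> n0; rewrite (proj1 (pcharf0P F) char0) -lt0n. Qed.

Lemma left_term h' k (al : cochain A M h'.+1) (be : cochain A M k) (x : A) (j : nat)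
  (a : seq A) (e : seq nat) (i : 'I_(h'+k).+1) (Hi : (i < h'.+1)%N) (t : 'S_(h'+k)) :
  is_cochain dA al ->
  wterm mulM al be [ffun q : 'I_(h'.+1 + k) => nth 0 (x :: a) q]
     [ffun q : 'I_(h'.+1 + k) => nth 0%N (j :: e) q] (lift_perm i ord0 t) =
  ((-1) ^+ odd_perm t / (((h'.+1)`!)%:R * (k`!)%:R)) *:
   mulM (al (cons_arg x [ffun q => [ffun q : 'I_(h'+k) => nth 0 a q] (t (lshift k q))]))@_(cons_exp j
                   [ffun q => [ffun q : 'I_(h'+k) => nth 0%N e q] (t (lshift k q))])
        (be [ffun q => [ffun q : 'I_(h'+k) => nth 0 a q] (t (rshift h' q))])@_[ffun q =>
                   [ffun q : 'I_(h'+k) => nth 0%N e q] (t (rshift h' q))].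
Proof.
case=> _ _ Hsk.
pose c := lift_perm (Ordinal Hi) ord0 1.
rewrite /wterm.
set U := cons_arg x _; set D := cons_exp j _.
have EU : [ffun q : 'I_h'.+1 => [ffun q : 'I_(h'.+1 + k) => nth 0 (x :: a) q] (lift_perm i ord0 t (lshift k q))]
          = [ffun q => U (c q)].
  apply/ffunP => q; rewrite !ffunE left_valL /c.
  by case: unlift => [w|] //=; rewrite !ffunE.
have ED : [ffun q : 'I_h'.+1 => [ffun q : 'I_(h'.+1 + k) => nth 0%N (j :: e) q] (lift_perm i ord0 t (lshift k q))]
          = [ffun q => D (c q)].
  apply/ffunP => q; rewrite !ffunE left_valL /c.
  by case: unlift => [w|] //=; rewrite !ffunE.
rewrite EU ED Hsk.
have EU2 : [ffun q : 'I_k => [ffun q : 'I_(h'.+1 + k) => nth 0 (x :: a) q] (lift_perm i ord0 t (rshift h'.+1 q))]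
          = [ffun q => [ffun q : 'I_(h'+k) => nth 0 a q] (t (rshift h' q))].
  by apply/ffunP => q; rewrite !ffunE left_valR.
have ED2 : [ffun q : 'I_k => [ffun q : 'I_(h'.+1 + k) => nth 0%N (j :: e) q] (lift_perm i ord0 t (rshift h'.+1 q))]
          = [ffun q => [ffun q : 'I_(h'+k) => nth 0%N e q] (t (rshift h' q))].
  by apply/ffunP => q; rewrite !ffunE left_valR.
rewrite EU2 ED2 (mulMZl mulMl) scalerA; congr (_ *: _).
rewrite /c !odd_lift_perm odd_perm1; exact: sign_cancel.
Qed.
End Blocks.
Lemma sign_cancel2 (F : fieldType) (oi oh oih b0 b2 : bool) (C : F) : b0 = false ->
  oi = oh (+) oih ->
  ((-1) ^+ (oi (+) b0 (+) b2) / C) * (-1) ^+ (oih (+) b0 (+) false) = (-1) ^+ oh * (-1) ^+ b2 / C.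
Proof. by move=> -> ->; case: oh; case: oih; case: b2; rewrite /= ?expr0 ?expr1; ring. Qed.

Section Blocks2.
Variables (F : fieldType) (A M : lmodType F) (mulM : M -> M -> M) (dA : {linear A -> A}).
Hypothesis mulMl : forall c x x' y, mulM (c *: x + x') y = c *: mulM x y + mulM x' y.
Hypothesis mulMr : forall c x y y', mulM x (c *: y + y') = c *: mulM x y + mulM x y'.

Lemma right_term h k' (al : cochain A M h) (be : cochain A M k'.+1) (x : A) (j : nat)
  (a : seq A) (e : seq nat) (i : 'I_(h+k').+1) (Hi : (h <= i)%N) (Hi2 : (i - h < k'.+1)%N)
  (t : 'S_(h+k')) :
  is_cochain dA be ->
  wterm mulM al be [ffun q : 'I_(h + k'.+1) => nth 0 (x :: a) q]
     [ffun q : 'I_(h + k'.+1) => nth 0%N (j :: e) q] (cast_perm (esym (addnS h k')) (lift_perm i ord0 t)) =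
  ((-1) ^+ odd h * (-1) ^+ odd_perm t / ((h`!)%:R * ((k'.+1)`!)%:R)) *:
   mulM (al [ffun q => [ffun q : 'I_(h+k') => nth 0 a q] (t (lshift k' q))])@_[ffun q =>
                   [ffun q : 'I_(h+k') => nth 0%N e q] (t (lshift k' q))]
        (be (cons_arg x [ffun q => [ffun q : 'I_(h+k') => nth 0 a q] (t (rshift h q))]))@_(cons_exp j
                   [ffun q => [ffun q : 'I_(h+k') => nth 0%N e q] (t (rshift h q))]).
Proof.
case=> _ _ Hsk.
pose c := lift_perm (Ordinal Hi2) ord0 1.
rewrite /wterm.
set U := cons_arg x _; set D := cons_exp j _.
have EU : [ffun q : 'I_k'.+1 => [ffun q : 'I_(h + k'.+1) => nth 0 (x :: a) q]
     (cast_perm (esym (addnS h k')) (lift_perm i ord0 t) (rshift h q))] = [ffun q => U (c q)].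
  apply/ffunP => q; rewrite !ffunE (right_valR Hi) /c.
  by case: unlift => [w|] //=; rewrite !ffunE.
have ED : [ffun q : 'I_k'.+1 => [ffun q : 'I_(h + k'.+1) => nth 0%N (j :: e) q]
     (cast_perm (esym (addnS h k')) (lift_perm i ord0 t) (rshift h q))] = [ffun q => D (c q)].
  apply/ffunP => q; rewrite !ffunE (right_valR Hi) /c.
  by case: unlift => [w|] //=; rewrite !ffunE.
rewrite EU ED Hsk.
have EU2 : [ffun q : 'I_h => [ffun q : 'I_(h + k'.+1) => nth 0 (x :: a) q]
     (cast_perm (esym (addnS h k')) (lift_perm i ord0 t) (lshift k'.+1 q))]
          = [ffun q => [ffun q : 'I_(h+k') => nth 0 a q] (t (lshift k' q))].
  by apply/ffunP => q; rewrite !ffunE (right_valL Hi).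
have ED2 : [ffun q : 'I_h => [ffun q : 'I_(h + k'.+1) => nth 0%N (j :: e) q]
     (cast_perm (esym (addnS h k')) (lift_perm i ord0 t) (lshift k'.+1 q))]
          = [ffun q => [ffun q : 'I_(h+k') => nth 0%N e q] (t (lshift k' q))].
  by apply/ffunP => q; rewrite !ffunE (right_valL Hi).
rewrite EU2 ED2 (mulMZr mulMr) scalerA; congr (_ *: _).
rewrite odd_cast_perm /c !odd_lift_perm odd_perm1; apply: sign_cancel2 => //.
by rewrite -oddD subnKC.
Qed.
End Blocks2.
Lemma sum_const_lt (V : zmodType) n h (x : V) : (h <= n)%N ->
  \sum_(i < n | (i < h)%N) x = x *+ h.
Proof. by move=> le; rewrite -(big_ord_widen n (fun _ => x) le) sumr_const card_ord. Qed.

Lemma sum_const_ge (V : zmodType) n h (x : V) : (h <= n)%N ->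
  \sum_(i < n | (h <= i)%N) x = x *+ (n - h).
Proof.
move=> le.
have E : \sum_(i < n) x = \sum_(i < n | (i < h)%N) x + \sum_(i < n | ~~ (i < h)%N) x.
  exact: bigID.
rewrite sumr_const card_ord sum_const_lt // in E.
under eq_bigl do rewrite leqNgt.
by apply: (@addrI _ (x *+ h)); rewrite -E -mulrnDr subnKC.
Qed.

Section Blocks3.
Variables (F : fieldType) (A M : lmodType F) (mulM : M -> M -> M) (dA : {linear A -> A}).
Hypothesis mulMl : forall c x x' y, mulM (c *: x + x') y = c *: mulM x y + mulM x' y.
Hypothesis mulMr : forall c x y y', mulM x (c *: y + y') = c *: mulM x y + mulM x y'.
Hypothesis char0 : [pchar F] =i pred0.

Lemma left_block h' k (al : cochain A M h'.+1) (be : cochain A M k) (x : A) (j : nat)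
  (a : seq A) (e : seq nat) (z0 : 'I_(h'.+1 + k)) :
  is_cochain dA al -> val z0 = 0%N ->
  \sum_(s : 'S_(h'.+1 + k) | (val ((s^-1)%g z0) < h'.+1)%N)
     wterm mulM al be [ffun q : 'I_(h'.+1 + k) => nth 0 (x :: a) q]
     [ffun q : 'I_(h'.+1 + k) => nth 0%N (j :: e) q] s =
  \sum_(t : 'S_(h'+k)) ((-1) ^+ odd_perm t / ((h'`!)%:R * (k`!)%:R)) *:
   mulM (al (cons_arg x [ffun q => [ffun q : 'I_(h'+k) => nth 0 a q] (t (lshift k q))]))@_(cons_exp j
                   [ffun q => [ffun q : 'I_(h'+k) => nth 0%N e q] (t (lshift k q))])
        (be [ffun q => [ffun q : 'I_(h'+k) => nth 0 a q] (t (rshift h' q))])@_[ffun q =>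
                   [ffun q : 'I_(h'+k) => nth 0%N e q] (t (rshift h' q))].
Proof.
move=> Hal Hz.
rewrite (@split_perm_sum _ _ (h'+k) erefl (fun v => (v < h'.+1)%N) _ z0 Hz) exchange_big.
apply: eq_bigr => t _.
under eq_bigr => i Hi do rewrite cast_perm_id (left_term mulMl _ _ _ _ _ Hi _ Hal).
rewrite sum_const_lt ?ltnS ?leq_addr // scalerMnl; congr (_ *: _).
set sg := (-1) ^+ _; clearbody sg.
rewrite factS natrM -mulr_natr.
have h0 := natF_neq0 char0 (ltn0Sn h').
have f0 := natF_neq0 char0 (fact_gt0 h').
have k0 := natF_neq0 char0 (fact_gt0 k).
move: (h'.+1%:R : F) (h'`!%:R : F) (k`!%:R : F) h0 f0 k0 => u v w h0 f0 k0.
by clear -h0 f0 k0; field; rewrite h0 f0 k0.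
Qed.

Lemma right_block h k' (al : cochain A M h) (be : cochain A M k'.+1) (x : A) (j : nat)
  (a : seq A) (e : seq nat) (z0 : 'I_(h + k'.+1)) :
  is_cochain dA be -> val z0 = 0%N ->
  \sum_(s : 'S_(h + k'.+1) | (h <= val ((s^-1)%g z0))%N)
     wterm mulM al be [ffun q : 'I_(h + k'.+1) => nth 0 (x :: a) q]
     [ffun q : 'I_(h + k'.+1) => nth 0%N (j :: e) q] s =
  (-1) ^+ h *: \sum_(t : 'S_(h+k')) ((-1) ^+ odd_perm t / ((h`!)%:R * (k'`!)%:R)) *:
   mulM (al [ffun q => [ffun q : 'I_(h+k') => nth 0 a q] (t (lshift k' q))])@_[ffun q =>
                   [ffun q : 'I_(h+k') => nth 0%N e q] (t (lshift k' q))]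
        (be (cons_arg x [ffun q => [ffun q : 'I_(h+k') => nth 0 a q] (t (rshift h q))]))@_(cons_exp j
                   [ffun q => [ffun q : 'I_(h+k') => nth 0%N e q] (t (rshift h q))]).
Proof.
move=> Hbe Hz.
rewrite (@split_perm_sum _ _ (h+k') (addnS h k') (fun v => (h <= v)%N) _ z0 Hz) exchange_big.
rewrite scaler_sumr; apply: eq_bigr => t _.
have Hi2 : forall i : 'I_(h+k').+1, (i - h < k'.+1)%N.
  by move=> i; rewrite ltnS leq_subLR -ltnS.
under eq_bigr => i Hi do rewrite (right_term mulMr _ _ _ _ _ Hi (Hi2 i) _ Hbe).
rewrite sum_const_ge; last by rewrite leqW ?leq_addr.
rewrite scalerMnl scalerA; congr (_ *: _).
rewrite subSn ?leq_addr // addKn factS natrM.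
set sg := (-1) ^+ odd_perm _; clearbody sg.
rewrite signr_odd.
set sh := (-1) ^+ h; clearbody sh.
have h0 := natF_neq0 char0 (ltn0Sn k').
have f0 := natF_neq0 char0 (fact_gt0 h).
have k0 := natF_neq0 char0 (fact_gt0 k').
rewrite -mulr_natr.
move: (k'.+1%:R : F) (h`!%:R : F) (k'`!%:R : F) h0 f0 k0 => u v w h0 f0 k0.
by clear -h0 f0 k0; field; rewrite h0 f0 k0.
Qed.
End Blocks3.
Lemma eq_big_seqT (V : zmodType) (T : Type) (xi : seq T) (F G : T -> V) :
  (forall p, List.In p xi -> F p = G p) -> \sum_(p <- xi) F p = \sum_(p <- xi) G p.
Proof.
elim: xi => [|p xi IH] H; first by rewrite !big_nil.
rewrite !big_cons H /=; last by left.
by rewrite IH // => q Hq; apply: H; right.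
Qed.

Lemma In_map_fst (T1 : eqType) (T2 : Type) (xi : seq (T1 * T2)) p :
  List.In p xi -> p.1 \in [seq q.1 | q <- xi].
Proof.
elim: xi => [|q xi IH] //= [->|H]; rewrite inE ?eqxx //.
by rewrite IH ?orbT.
Qed.

Section Iota2.
Variables (F : fieldType) (A M : lmodType F) (mulM : M -> M -> M).
Hypothesis mulMr : forall c x y y', mulM x (c *: y + y') = c *: mulM x y + mulM x y'.

Lemma iotaS_coefE (xi : gamma1_rep A M) n (g : cochain A M n.+1) (b : {ffun 'I_n -> A})
  (d : {ffun 'I_n -> nat}) B L :
  bnd g L B -> (forall q, b q \in L) -> (forall x, x \in [seq p.1 | p <- xi] -> x \in L) ->
  (iotaS mulM xi g b)@_d =
  \sum_(p <- xi) \sum_(j < B) mulM (p.2 'X^j) (g (cons_arg p.1 b))@_(cons_exp j d).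
Proof.
move=> Hg Hb Hxi; rewrite /iotaS raddf_sum; apply: eq_big_seqT => p Hp.
rewrite /= (@iota1E _ _ _ mulMr _ _ _ _ B) // => j Hj.
apply: (Hg _ _ ord0); last by rewrite cons_exp0.
move=> q; rewrite ffunE; case: unlift => [w|] //.
exact/Hxi/In_map_fst.
Qed.
End Iota2.
Section Parts.
Variables (F : fieldType) (A M : lmodType F) (mulM : M -> M -> M) (dA : {linear A -> A}).
Hypothesis mulMl : forall c x x' y, mulM (c *: x + x') y = c *: mulM x y + mulM x' y.
Hypothesis mulMr : forall c x y y', mulM x (c *: y + y') = c *: mulM x y + mulM x y'.
Hypothesis mulMA : forall x y z, mulM x (mulM y z) = mulM (mulM x y) z.
Hypothesis mulMC : forall x y, mulM x y = mulM y x.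
Hypothesis char0 : [pchar F] =i pred0.

Lemma L_part h' k (al : cochain A M h'.+1) (be : cochain A M k) (xi : gamma1_rep A M)
  a e B L (z0 : 'I_(h'.+1 + k)) :
  is_cochain dA al -> bnd al L B -> (forall q, nth 0 a q \in L) ->
  (forall x, x \in [seq p.1 | p <- xi] -> x \in L) ->
  size a = (h' + k)%N -> size e = (h' + k)%N -> val z0 = 0%N ->
  \sum_(p <- xi) \sum_(j < B) mulM (p.2 'X^j)
     (\sum_(s : 'S_(h'.+1 + k) | (val ((s^-1)%g z0) < h'.+1)%N)
        wterm mulM al be [ffun q : 'I_(h'.+1 + k) => nth 0 (p.1 :: a) q]
          [ffun q : 'I_(h'.+1 + k) => nth 0%N ((j : nat) :: e) q] s)
  = gcomp (wedge mulM (contr mulM xi al) be) a e.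
Proof.
move=> Hal Hb HL Hxi Sa Se Hz.
rewrite /gcomp /= Sa Se eqxx /= (wedgeE mulMl mulMr).
transitivity (\sum_(p <- xi) \sum_(j < B) \sum_(t : 'S_(h' + k))
  ((-1) ^+ odd_perm t / ((h'`!)%:R * (k`!)%:R)) *:
   mulM (mulM (p.2 'X^j) (al (cons_arg p.1 [ffun q => [ffun q : 'I_(h'+k) => nth 0 a q] (t (lshift k q))]))@_(cons_exp j
                   [ffun q => [ffun q : 'I_(h'+k) => nth 0%N e q] (t (lshift k q))]))
        (be [ffun q => [ffun q : 'I_(h'+k) => nth 0 a q] (t (rshift h' q))])@_[ffun q =>
                   [ffun q : 'I_(h'+k) => nth 0%N e q] (t (rshift h' q))]).
  apply: eq_bigr => p _; apply: eq_bigr => j _.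
  rewrite (left_block mulMl char0 _ _ _ _ _ Hal Hz) (mulM_sumr mulMr).
  by apply: eq_bigr => t _; rewrite (mulMZr mulMr) mulMA.
under eq_bigr do rewrite exchange_big.
rewrite exchange_big; apply: eq_bigr => t _.
rewrite /wterm (iotaS_coefE mulMr _ Hb) //; last first.
  by move=> q; rewrite !ffunE.
rewrite (mulM_suml mulMl) scaler_sumr; apply: eq_bigr => p _.
by rewrite (mulM_suml mulMl) scaler_sumr.
Qed.
End Parts.
Section Parts2.
Variables (F : fieldType) (A M : lmodType F) (mulM : M -> M -> M) (dA : {linear A -> A}).
Hypothesis mulMl : forall c x x' y, mulM (c *: x + x') y = c *: mulM x y + mulM x' y.
Hypothesis mulMr : forall c x y y', mulM x (c *: y + y') = c *: mulM x y + mulM x y'.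
Hypothesis mulMA : forall x y z, mulM x (mulM y z) = mulM (mulM x y) z.
Hypothesis mulMC : forall x y, mulM x y = mulM y x.
Hypothesis char0 : [pchar F] =i pred0.

Lemma R_part h k' (al : cochain A M h) (be : cochain A M k'.+1) (xi : gamma1_rep A M)
  a e B L (z0 : 'I_(h + k'.+1)) :
  is_cochain dA be -> bnd be L B -> (forall q, nth 0 a q \in L) ->
  (forall x, x \in [seq p.1 | p <- xi] -> x \in L) ->
  size a = (h + k')%N -> size e = (h + k')%N -> val z0 = 0%N ->
  \sum_(p <- xi) \sum_(j < B) mulM (p.2 'X^j)
     (\sum_(s : 'S_(h + k'.+1) | (h <= val ((s^-1)%g z0))%N)
        wterm mulM al be [ffun q : 'I_(h + k'.+1) => nth 0 (p.1 :: a) q]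
          [ffun q : 'I_(h + k'.+1) => nth 0%N ((j : nat) :: e) q] s)
  = (-1) ^+ h *: gcomp (wedge mulM al (contr mulM xi be)) a e.
Proof.
move=> Hbe Hb HL Hxi Sa Se Hz.
rewrite /gcomp /= Sa Se eqxx /= (wedgeE mulMl mulMr) scaler_sumr.
transitivity (\sum_(p <- xi) \sum_(j < B) \sum_(t : 'S_(h + k'))
  (-1) ^+ h *: (((-1) ^+ odd_perm t / ((h`!)%:R * (k'`!)%:R)) *:
   mulM (al [ffun q => [ffun q : 'I_(h+k') => nth 0 a q] (t (lshift k' q))])@_[ffun q =>
                   [ffun q : 'I_(h+k') => nth 0%N e q] (t (lshift k' q))]
        (mulM (p.2 'X^j) (be (cons_arg p.1 [ffun q => [ffun q : 'I_(h+k') => nth 0 a q] (t (rshift h q))]))@_(cons_exp j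
                   [ffun q => [ffun q : 'I_(h+k') => nth 0%N e q] (t (rshift h q))])))).
  apply: eq_bigr => p _; apply: eq_bigr => j _.
  rewrite (right_block mulMr char0 _ _ _ _ _ Hbe Hz) (mulMZr mulMr) (mulM_sumr mulMr) scaler_sumr.
  apply: eq_bigr => t _; rewrite (mulMZr mulMr).
  by rewrite mulMA (mulMC (p.2 _)) -mulMA.
under eq_bigr do rewrite exchange_big.
rewrite exchange_big; apply: eq_bigr => t _.
rewrite /wterm (iotaS_coefE mulMr _ Hb) //; last first.
  by move=> q; rewrite !ffunE.
rewrite (mulM_sumr mulMr) !scaler_sumr; apply: eq_bigr => p _.
rewrite (mulM_sumr mulMr) !scaler_sumr; apply: eq_bigr => j _.
by [].
Qed.
End Parts2.
Section Main.
Variables (F : fieldType) (A M : lmodType F) (mulM : M -> M -> M) (dA : {linear A -> A}).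
Hypothesis mulMl : forall c x x' y, mulM (c *: x + x') y = c *: mulM x y + mulM x' y.
Hypothesis mulMr : forall c x y y', mulM x (c *: y + y') = c *: mulM x y + mulM x y'.
Hypothesis mulMA : forall x y z, mulM x (mulM y z) = mulM (mulM x y) z.
Hypothesis mulMC : forall x y, mulM x y = mulM y x.
Hypothesis char0 : [pchar F] =i pred0.

Lemma wedge0l h k (al : cochain A M h) (be : cochain A M k) a e :
  (forall b, al b = 0) -> gcomp (wedge mulM al be) a e = 0.
Proof.
move=> H; rewrite /gcomp; case: ifP => // _; rewrite (wedgeE mulMl mulMr) big1 // => s _.
by rewrite /wterm H mcoeff0 (mulM0l mulMl) scaler0.
Qed.

Lemma wedge0r h k (al : cochain A M h) (be : cochain A M k) a e :
  (forall b, be b = 0) -> gcomp (wedge mulM al be) a e = 0.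
Proof.
move=> H; rewrite /gcomp; case: ifP => // _; rewrite (wedgeE mulMl mulMr) big1 // => s _.
by rewrite /wterm H mcoeff0 (mulM0r mulMr) scaler0.
Qed.

Lemma wedge_van h k (al : cochain A M h) (be : cochain A M k) L B x a j e :
  bnd al L B -> bnd be L B -> x \in L -> (forall q, nth 0 a q \in L) -> (B <= j)%N ->
  gcomp (wedge mulM al be) (x :: a) (j :: e) = 0.
Proof.
move=> Ha Hb xL HL Bj; rewrite /gcomp; case: ifP => // /andP [/eqP Sa _].
rewrite (wedgeE mulMl mulMr) big1 // => s _.
have lt0 : (0 < h + k)%N by rewrite -Sa.
pose z := Ordinal lt0.
have Hbb : forall w : 'I_(h + k), [ffun q : 'I_(h + k) => nth 0 (x :: a) q] w \in L.
  by move=> w; rewrite ffunE; case: (nat_of_ord w) => [|w'] /=.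
rewrite /wterm; case: (splitP ((s^-1)%g z)) => i Ei.
  have Ez : s (lshift k i) = z.
    by rewrite (_ : lshift k i = (s^-1)%g z) ?permKV //; apply: val_inj.
  rewrite (Ha _ _ i) ?(mulM0l mulMl) ?scaler0 // => [q|]; first by rewrite ffunE.
  by rewrite !ffunE Ez.
have Ez : s (rshift h i) = z.
  by rewrite (_ : rshift h i = (s^-1)%g z) ?permKV //; apply: val_inj.
rewrite (Hb _ _ i) ?(mulM0r mulMr) ?scaler0 // => [q|]; first by rewrite ffunE.
by rewrite !ffunE Ez.
Qed.

Lemma lhs_expand h k (al : cochain A M h) (be : cochain A M k) (xi : gamma1_rep A M) a e B
  (z0 : 'I_(h + k)) :
  (forall x, x \in [seq p.1 | p <- xi] -> forall j, (B <= j)%N ->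
      gcomp (wedge mulM al be) (x :: a) (j :: e) = 0) ->
  (size a).+1 = (h + k)%N -> (size e).+1 = (h + k)%N -> val z0 = 0%N ->
  gcomp (contr mulM xi (wedge mulM al be)) a e =
  \sum_(p <- xi) \sum_(j < B) mulM (p.2 'X^j)
     (\sum_(s : 'S_(h + k) | (val ((s^-1)%g z0) < h)%N)
        wterm mulM al be [ffun q : 'I_(h + k) => nth 0 (p.1 :: a) q]
          [ffun q : 'I_(h + k) => nth 0%N ((j : nat) :: e) q] s) +
  \sum_(p <- xi) \sum_(j < B) mulM (p.2 'X^j)
     (\sum_(s : 'S_(h + k) | (h <= val ((s^-1)%g z0))%N)
        wterm mulM al be [ffun q : 'I_(h + k) => nth 0 (p.1 :: a) q]
          [ffun q : 'I_(h + k) => nth 0%N ((j : nat) :: e) q] s).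
Proof.
move=> Hv Sa Se Hz; rewrite (contrE mulMr Hv) -big_split; apply: eq_bigr => p _.
rewrite -big_split; apply: eq_bigr => j _; rewrite [in RHS]/= -(mulMDr mulMr).
rewrite /gcomp /= Sa Se eqxx /= (wedgeE mulMl mulMr).
rewrite (bigID (fun s : 'S_(h + k) => (val ((s^-1)%g z0) < h)%N)) /=.
by congr (mulM _ (_ + _)); apply: eq_bigl => s; rewrite -leqNgt.
Qed.

Lemma EqL h k (al : cochain A M h) (be : cochain A M k) (xi : gamma1_rep A M) a e B L
  (z0 : 'I_(h + k)) :
  is_cochain dA al -> bnd al L B -> (forall q, nth 0 a q \in L) ->
  (forall x, x \in [seq p.1 | p <- xi] -> x \in L) ->
  (size a).+1 = (h + k)%N -> (size e).+1 = (h + k)%N -> val z0 = 0%N ->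
  \sum_(p <- xi) \sum_(j < B) mulM (p.2 'X^j)
     (\sum_(s : 'S_(h + k) | (val ((s^-1)%g z0) < h)%N)
        wterm mulM al be [ffun q : 'I_(h + k) => nth 0 (p.1 :: a) q]
          [ffun q : 'I_(h + k) => nth 0%N ((j : nat) :: e) q] s)
  = gcomp (wedge mulM (contr mulM xi al) be) a e.
Proof.
case: h al z0 => [|h'] al z0 Hal Hb HL Hxi Sa Se Hz.
  rewrite wedge0l // big1 // => p _; rewrite big1 // => j _.
  by rewrite big_pred0 ?(mulM0r mulMr) // => s; rewrite ltn0.
by apply: (L_part mulMl mulMr mulMA char0 _ Hal Hb HL Hxi) => //; [case: Sa | case: Se].
Qed.

Lemma EqR h k (al : cochain A M h) (be : cochain A M k) (xi : gamma1_rep A M) a e B L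
  (z0 : 'I_(h + k)) :
  is_cochain dA be -> bnd be L B -> (forall q, nth 0 a q \in L) ->
  (forall x, x \in [seq p.1 | p <- xi] -> x \in L) ->
  (size a).+1 = (h + k)%N -> (size e).+1 = (h + k)%N -> val z0 = 0%N ->
  \sum_(p <- xi) \sum_(j < B) mulM (p.2 'X^j)
     (\sum_(s : 'S_(h + k) | (h <= val ((s^-1)%g z0))%N)
        wterm mulM al be [ffun q : 'I_(h + k) => nth 0 (p.1 :: a) q]
          [ffun q : 'I_(h + k) => nth 0%N ((j : nat) :: e) q] s)
  = (-1) ^+ h *: gcomp (wedge mulM al (contr mulM xi be)) a e.
Proof.
case: k be z0 => [|k'] be z0 Hbe Hb HL Hxi Sa Se Hz.
  rewrite wedge0r // scaler0 big1 // => p _; rewrite big1 // => j _.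
  rewrite big_pred0 ?(mulM0r mulMr) // => s.
  by rewrite leqNgt (leq_trans (ltn_ord _)) // addn0.
apply: (R_part mulMl mulMr mulMA mulMC char0 _ Hbe Hb HL Hxi) => //.
  by move: Sa; rewrite addnS; case.
by move: Se; rewrite addnS; case.
Qed.
End Main.
Unset Implicit Arguments.
Set Strict Implicit.
Theorem proposition3p25 (F : fieldType) (A M : lmodType F)
  (dA : {linear A -> A}) (br : A -> A -> {malg A[nat]})
  (dM : {linear M -> M}) (act : A -> M -> {malg M[nat]}) (mulM : M -> M -> M) :
  [pchar F] =i pred0 ->
  is_LCA dA br ->
  is_LCA_module dA br dM act ->
  is_deriv_product dM act mulM ->
  forall (xi : gamma1_rep A M) (h k : nat)
         (al : cochain A M h) (be : cochain A M k),
  is_cochain dA al -> is_cochain dA be ->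
  forall (a : seq A) (e : seq nat),
    gcomp (contr mulM xi (wedge mulM al be)) a e =
    gcomp (wedge mulM (contr mulM xi al) be) a e
    + (-1) ^+ h *: gcomp (wedge mulM al (contr mulM xi be)) a e.
Proof.
move=> char0 _ _ [[mulMl mulMr] [mulMA mulMC _ _]] xi h k al be Hal Hbe a e.
pose L := 0 :: [seq p.1 | p <- xi] ++ a.
have HL : forall q, nth 0 a q \in L.
  move=> q; rewrite /L inE mem_cat; case: (ltnP q (size a)) => [lt|ge].
    by rewrite mem_nth ?orbT.
  by rewrite nth_default // eqxx.
have Hxi : forall x, x \in [seq p.1 | p <- xi] -> x \in L.
  by move=> x Hx; rewrite /L inE mem_cat Hx orbT.
have [Ba HBa] := bnd_exists al L; have [Bb HBb] := bnd_exists be L.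
have Hba := bnd_mono (leq_maxl Ba Bb) HBa; have Hbb := bnd_mono (leq_maxr Ba Bb) HBb.
have Hv : forall x, x \in [seq p.1 | p <- xi] -> forall j, (maxn Ba Bb <= j)%N ->
    gcomp (wedge mulM al be) (x :: a) (j :: e) = 0.
  by move=> x Hx j Hj; exact: (wedge_van mulMl mulMr e Hba Hbb (Hxi x Hx) HL Hj).
case SZ: ((((size a).+1 == h + k) && ((size e).+1 == h + k))%N); last first.
  have Hv0 : forall x, x \in [seq p.1 | p <- xi] -> forall j, (0 <= j)%N ->
      gcomp (wedge mulM al be) (x :: a) (j :: e) = 0.
    by move=> x _ j _; rewrite /gcomp /= SZ.
  rewrite (contrE mulMr Hv0) big1 => [|p _]; last by rewrite big_ord0.
  have -> : gcomp (wedge mulM (contr mulM xi al) be) a e = 0.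
    clear Hv0; case: h al Hal Hba HBa Hv SZ => [|h'] al Hal Hba HBa Hv SZ; first by rewrite wedge0l.
    by rewrite /gcomp /= -eqSS -[(size e == _)]eqSS SZ.
  have -> : gcomp (wedge mulM al (contr mulM xi be)) a e = 0.
    clear Hv0; case: k be Hbe Hbb HBb Hv SZ => [|k'] be Hbe Hbb HBb Hv SZ; first by rewrite wedge0r.
    by rewrite /gcomp /= -eqSS -[(size e == _)]eqSS -!addnS SZ.
  by rewrite scaler0 addr0.
case/andP: SZ => /eqP Sa /eqP Se.
have lt0 : (0 < h + k)%N by move: Sa => <-.
rewrite (@lhs_expand _ _ _ mulM mulMl mulMr _ _ al be xi a e _ (Ordinal lt0) Hv Sa Se erefl).
congr (_ + _).
  exact: (EqL mulMl mulMr mulMA char0 _ Hal Hba HL Hxi Sa Se).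
exact: (EqR mulMl mulMr mulMA mulMC char0 _ Hbe Hbb HL Hxi Sa Se).
Qed.
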